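(* Let $\mathbb{T}$ be a bounded time scale, $\alpha=\inf\mathbb{T}$, $\beta=\rho(\sup\mathbb{T})$ with $\alpha\neq\beta$, let $a\in\mathbb{T}^{\kappa}$, and let $q$ be a real-valued continuous function. Consider the boundary value problem consisting of $$-y^{\Delta\Delta}(t)+q(t)\,y(a)=\lambda\, y^{\sigma}(t),\qquad t\in\mathbb{T}^{\kappa^{2}},$$ together with the boundary conditions $U(y)=0$, $V(y)=0$, where $$U(y)=a_{11}y(\alpha)+a_{12}y^{\Delta}(\alpha)+a_{21}y(\beta)+a_{22}y^{\Delta}(\beta),\qquad V(y)=b_{11}y(\alpha)+b_{12}y^{\Delta}(\alpha)+b_{21}y(\beta)+b_{22}y^{\Delta}(\beta),$$ with real coefficients $a_{ij},b_{ij}$ ($i,j=1,2$). Let $S(t,\lambda)$, $C(t,\lambda)$ be the solutions of the equation with $S(a,\lambda)=0$, $S^{\Delta}(a,\lambda)=1$, $C(a,\lambda)=1$, $C^{\Delta}(a,\lambda)=0$, and define $$\Delta(\lambda)=\det\begin{pmatrix}U(C) & V(C)\\ U(S) & V(S)\end{pmatrix}=U(C(\cdot,\lambda))V(S(\cdot,\lambda))-V(C(\cdot,\lambda))U(S(\cdot,\lambda)).$$ Then the zeros of $\Delta(\lambda)$ coincide with the eigenvalues of this boundary value problem (i.e. with the values $\lambda\in\mathbb{C}$ for which the problem has a nontrivial solution).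
   Context: For a time scale $\mathbb{T}$, $\sigma$ and $\rho$ are the forward and backward jump operators, $y^{\sigma}=y\circ\sigma$, $y^{\Delta}$ and $y^{\Delta\Delta}$ are the first and second delta derivatives, $\mathbb{T}^{\kappa}=\mathbb{T}\setminus(\rho(\sup\mathbb{T}),\sup\mathbb{T}]$, $\mathbb{T}^{\kappa^2}=(\mathbb{T}^{\kappa})^{\kappa}$. $\lambda\in\mathbb{C}$ is the spectral parameter. *)

(* Defs.v *)
From Stdlib Require Import Reals.
From Coquelicot Require Import Coquelicot.
Open Scope R_scope.

Definition is_time_scale (T : R -> Prop) : Prop :=
  (exists t, T t) /\
  (forall x, (forall eps, 0 < eps -> exists s, T s /\ Rabs (s - x) < eps) -> T x).

Definition bounded_set (T : R -> Prop) : Prop :=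
  exists M, forall t, T t -> Rabs t <= M.

(** sup and inf of T (meaningful for nonempty bounded T). *)
Definition sup_ts (T : R -> Prop) : R :=
  match Lub_Rbar T with Finite x => x | _ => 0 end.
Definition inf_ts (T : R -> Prop) : R :=
  match Glb_Rbar T with Finite x => x | _ => 0 end.

(** Forward jump sigma(t) = inf {s in T | s > t}, with inf emptyset = t;
    backward jump rho(t) = sup {s in T | s < t}, with sup emptyset = t. *)
Definition sigma_ts (T : R -> Prop) (t : R) : R :=
  match Glb_Rbar (fun s => T s /\ t < s) with Finite x => x | _ => t end.
Definition rho_ts (T : R -> Prop) (t : R) : R :=
  match Lub_Rbar (fun s => T s /\ s < t) with Finite x => x | _ => t end.

Definition kappa_ts (T : R -> Prop) (t : R) : Prop :=
  T t /\ ~ (rho_ts T (sup_ts T) < t /\ t <= sup_ts T).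

Definition is_delta_deriv (T : R -> Prop) (f : R -> C) (t : R) (d : C) : Prop :=
  forall eps, 0 < eps -> exists delta, 0 < delta /\
    forall s, T s -> Rabs (t - s) < delta ->
      Cmod (Cminus (Cminus (f (sigma_ts T t)) (f s))
                   (Cmult d (RtoC (sigma_ts T t - s))))
        <= eps * Rabs (sigma_ts T t - s).

Definition continuous_on_ts (T : R -> Prop) (q : R -> R) : Prop :=
  forall t, T t -> forall eps, 0 < eps -> exists delta, 0 < delta /\
    forall s, T s -> Rabs (s - t) < delta -> Rabs (q s - q t) < eps.

(** y solves -y^{DD}(t) + q(t) y(a) = lam y^sigma(t), t in T^{kappa^2};
    y1 is the delta derivative y^D of y on T^kappa. *)
Definition is_solution (T : R -> Prop) (q : R -> R) (a : R) (lam : C)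
    (y y1 : R -> C) : Prop :=
  (forall t, kappa_ts T t -> is_delta_deriv T y t (y1 t)) /\
  exists y2 : R -> C,
    forall t, kappa_ts (kappa_ts T) t ->
      is_delta_deriv (kappa_ts T) y1 t (y2 t) /\
      Cplus (Copp (y2 t)) (Cmult (RtoC (q t)) (y a))
        = Cmult lam (y (sigma_ts T t)).

Definition bform (c11 c12 c21 c22 al be : R) (y y1 : R -> C) : C :=
  Cplus (Cplus (Cmult (RtoC c11) (y al)) (Cmult (RtoC c12) (y1 al)))
        (Cplus (Cmult (RtoC c21) (y be)) (Cmult (RtoC c22) (y1 be))).

Definition is_eigenvalue (T : R -> Prop) (q : R -> R) (a : R)
    (a11 a12 a21 a22 b11 b12 b21 b22 : R) (lam : C) : Prop :=
  let al := inf_ts T in let be := rho_ts T (sup_ts T) in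
  exists y y1 : R -> C,
    is_solution T q a lam y y1 /\
    bform a11 a12 a21 a22 al be y y1 = RtoC 0 /\
    bform b11 b12 b21 b22 al be y y1 = RtoC 0 /\
    exists t, T t /\ y t <> RtoC 0.

(* Main.v *)
Require Import Defs.
From Stdlib Require Import Reals Lra Classical.
From Coquelicot Require Import Coquelicot.
Open Scope R_scope.

Lemma lub_ex (E : R -> Prop) x0 B : E x0 -> (forall x, E x -> x <= B) ->
  exists l, Lub_Rbar E = Finite l /\ (forall x, E x -> x <= l) /\
    (forall b, (forall x, E x -> x <= b) -> l <= b).
Proof.
  intros H0 HB. destruct (Lub_Rbar_correct E) as [Hub Hl].
  destruct (Lub_Rbar E) as [r| |] eqn:Hq.
  - exists r. split; [reflexivity|]. split.
    + intros x Hx. exact (Hub x Hx).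
    + intros b Hb. exact (Hl (Finite b) Hb).
  - exfalso. exact (Hl (Finite B) HB).
  - exfalso. exact (Hub x0 H0).
Qed.

Lemma glb_ex (E : R -> Prop) x0 B : E x0 -> (forall x, E x -> B <= x) ->
  exists l, Glb_Rbar E = Finite l /\ (forall x, E x -> l <= x) /\
    (forall b, (forall x, E x -> b <= x) -> b <= l).
Proof.
  intros H0 HB. destruct (Glb_Rbar_correct E) as [Hub Hl].
  destruct (Glb_Rbar E) as [r| |] eqn:Hq.
  - exists r. split; [reflexivity|]. split.
    + intros x Hx. exact (Hub x Hx).
    + intros b Hb. exact (Hl (Finite b) Hb).
  - exfalso. exact (Hub x0 H0).
  - exfalso. exact (Hl (Finite B) HB).
Qed.

Lemma lub_approx (E : R -> Prop) l :
  (forall b, (forall x, E x -> x <= b) -> l <= b) ->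
  forall e, 0 < e -> exists x, E x /\ l - e < x.
Proof.
  intros Hl e He. apply NNPP; intro Hn.
  assert (l <= l - e); [|lra].
  apply Hl. intros x Hx. apply Rnot_lt_le. intro Hc. apply Hn. exists x. auto.
Qed.

Lemma glb_approx (E : R -> Prop) l :
  (forall b, (forall x, E x -> b <= x) -> b <= l) ->
  forall e, 0 < e -> exists x, E x /\ x < l + e.
Proof.
  intros Hl e He. apply NNPP; intro Hn.
  assert (l + e <= l); [|lra].
  apply Hl. intros x Hx. apply Rnot_lt_le. intro Hc. apply Hn. exists x. auto.
Qed.

Lemma ts_closed T x : is_time_scale T ->
  (forall eps, 0 < eps -> exists s, T s /\ Rabs (s - x) < eps) -> T x.
Proof. intros [_ H] Hx. apply H; auto. Qed.

Lemma lub_in T (E : R -> Prop) l : is_time_scale T -> (forall x, E x -> T x) ->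
  (forall x, E x -> x <= l) ->
  (forall b, (forall x, E x -> x <= b) -> l <= b) -> T l.
Proof.
  intros HT HE Hu Hl. apply ts_closed; auto. intros e He.
  destruct (lub_approx E l Hl e He) as [x [Hx Hlx]].
  exists x. split; auto. specialize (Hu x Hx). apply Rabs_def1; lra.
Qed.

Lemma glb_in T (E : R -> Prop) l : is_time_scale T -> (forall x, E x -> T x) ->
  (forall x, E x -> l <= x) ->
  (forall b, (forall x, E x -> b <= x) -> b <= l) -> T l.
Proof.
  intros HT HE Hu Hl. apply ts_closed; auto. intros e He.
  destruct (glb_approx E l Hl e He) as [x [Hx Hlx]].
  exists x. split; auto. specialize (Hu x Hx). apply Rabs_def1; lra.
Qed.

Lemma bnd_up T : bounded_set T -> exists B, forall t, T t -> t <= B.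
Proof. intros [B H]. exists B. intros t Ht. specialize (H t Ht).
  pose proof (Rle_abs t). lra. Qed.

Lemma bnd_lo T : bounded_set T -> exists B, forall t, T t -> B <= t.
Proof. intros [B H]. exists (-B). intros t Ht. specialize (H t Ht).
  pose proof (Rle_abs (-t)). rewrite Rabs_Ropp in H0. lra. Qed.


Lemma Rmin_lt3 a b c : 0 < a -> 0 < b -> 0 < c -> 0 < Rmin a (Rmin b c).
Proof. intros. repeat apply Rmin_pos; auto. Qed.

Lemma glb_empty (E : R -> Prop) : (forall x, ~ E x) -> Glb_Rbar E = p_infty.
Proof. intros H. apply is_glb_Rbar_unique. split.
  - intros x Hx. destruct (H x Hx).
  - intros b _. destruct b; simpl; auto. Qed.

Lemma lub_empty (E : R -> Prop) : (forall x, ~ E x) -> Lub_Rbar E = m_infty.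
Proof. intros H. apply is_lub_Rbar_unique. split.
  - intros x Hx. destruct (H x Hx).
  - intros b _. destruct b; simpl; auto. Qed.

Lemma sig_rd T' t : (forall d, 0 < d -> exists s, T' s /\ t < s /\ s < t + d) ->
  sigma_ts T' t = t.
Proof.
  intros H. destruct (H 1 Rlt_0_1) as [s0 [H1 [H2 _]]].
  destruct (glb_ex (fun s => T' s /\ t < s) s0 t) as [g [Hg [Hu Hl]]];
    [auto | intros x [_ Hx]; lra |].
  unfold sigma_ts. rewrite Hg.
  assert (t <= g) by (apply Hl; intros x [_ Hx]; lra).
  apply Rle_antisym; auto. apply Rnot_lt_le. intro Hc.
  destruct (H (g - t)) as [s [Hs1 [Hs2 Hs3]]]; [lra|].
  specialize (Hu s (conj Hs1 Hs2)). lra.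
Qed.

Lemma sig_rs T' t s0 : T' s0 -> t < s0 -> (forall s, T' s -> t < s -> s0 <= s) ->
  sigma_ts T' t = s0.
Proof.
  intros H1 H2 H3.
  destruct (glb_ex (fun s => T' s /\ t < s) s0 t) as [g [Hg [Hu Hl]]];
    [auto | intros x [_ Hx]; lra |].
  unfold sigma_ts. rewrite Hg.
  apply Rle_antisym. apply Hu; auto. apply Hl. intros x [Hx1 Hx2]; auto.
Qed.

Lemma sig_top T' t : (forall s, T' s -> s <= t) -> sigma_ts T' t = t.
Proof.
  intros H. unfold sigma_ts. rewrite glb_empty; auto.
  intros x [Hx1 Hx2]. specialize (H x Hx1). lra.
Qed.

Lemma sig_cases T t : is_time_scale T ->
  (forall d, 0 < d -> exists s, T s /\ t < s /\ s < t + d) \/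
  (exists s0, T s0 /\ t < s0 /\ forall s, T s -> t < s -> s0 <= s) \/
  (forall s, T s -> s <= t).
Proof.
  intros HT. destruct (classic (exists s, T s /\ t < s)) as [[s0 [H1 H2]]|Hn].
  - destruct (glb_ex (fun s => T s /\ t < s) s0 t) as [g [Hg [Hu Hl]]];
      [auto | intros x [_ Hx]; lra |].
    assert (t <= g) by (apply Hl; intros x [_ Hx]; lra).
    destruct (Req_dec g t) as [Heq|Hne].
    + left. intros d Hd. destruct (glb_approx _ g Hl d Hd) as [x [[Hx1 Hx2] Hx3]].
      exists x. split; auto. split; auto. lra.
    + right; left. exists g. split.
      * apply (glb_in T (fun s => T s /\ t < s) g HT); auto. intros x [Hx _]; auto.
      * split; [lra|]. intros s Hs1 Hs2. apply Hu; auto.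
  - right; right. intros s Hs. apply Rnot_lt_le. intro Hc. apply Hn. eauto.
Qed.

Lemma sig_in T t : is_time_scale T -> T t -> T (sigma_ts T t).
Proof.
  intros HT Ht. destruct (sig_cases T t HT) as [H|[[s0 [H1 [H2 H3]]]|H]].
  - rewrite sig_rd; auto.
  - rewrite (sig_rs T t s0); auto.
  - rewrite sig_top; auto.
Qed.

Lemma sig_ge T' t : t <= sigma_ts T' t.
Proof.
  unfold sigma_ts. destruct (classic (exists s, T' s /\ t < s)) as [[s0 [H1 H2]]|Hn].
  - destruct (glb_ex (fun s => T' s /\ t < s) s0 t) as [g [Hg [Hu Hl]]];
      [auto | intros x [_ Hx]; lra |]. rewrite Hg. apply Hl. intros x [_ Hx]; lra.
  - rewrite glb_empty. lra. intros x Hx. apply Hn. eauto.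
Qed.

Lemma small0 x c : 0 <= x -> 0 <= c -> (forall e, 0 < e -> x <= e * c) -> x = 0.
Proof.
  intros Hx Hc H. destruct (Req_dec x 0); auto. exfalso.
  assert (Hp : 0 < x) by lra.
  specialize (H (x / (c + 1))). assert (0 < x / (c+1)) by (apply Rdiv_lt_0_compat; lra).
  specialize (H H1). unfold Rdiv in H.
  assert (x * / (c + 1) * c < x); [|lra].
  apply Rmult_lt_reg_r with (c + 1); [lra|].
  replace (x * / (c + 1) * c * (c + 1)) with (x * c) by (field; lra). nra.
Qed.

Lemma Cminus_eq0 a b c : Cminus (Cminus a b) c = RtoC 0 -> a = Cplus b c.
Proof. intros H. replace a with (Cplus (Cminus (Cminus a b) c) (Cplus b c)) by ring.
  rewrite H. ring. Qed.

Lemma d_step T' f t d : T' t -> is_delta_deriv T' f t d ->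
  f (sigma_ts T' t) = Cplus (f t) (Cmult d (RtoC (sigma_ts T' t - t))).
Proof.
  intros Ht Hd. apply Cminus_eq0. apply Cmod_eq_0.
  apply small0 with (Rabs (sigma_ts T' t - t)); [apply Cmod_ge_0|apply Rabs_pos|].
  intros e He. destruct (Hd e He) as [del [Hdel H]]. apply H; auto.
  replace (t - t) with 0 by ring. rewrite Rabs_R0. auto.
Qed.

Lemma est_l x y d r e : Cmod (Cminus (Cminus x y) (Cmult d (RtoC r))) <= e ->
  Cmod x <= Cmod y + Cmod d * Rabs r + e.
Proof.
  intros H. replace x with (Cplus y (Cplus (Cmult d (RtoC r)) (Cminus (Cminus x y) (Cmult d (RtoC r))))) by ring.
  eapply Rle_trans. apply Cmod_triangle. eapply Rle_trans.
  apply Rplus_le_compat_l. apply Cmod_triangle.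
  rewrite Cmod_mult, Cmod_R. lra.
Qed.

Lemma est_r x y d r e : Cmod (Cminus (Cminus x y) (Cmult d (RtoC r))) <= e ->
  Cmod y <= Cmod x + Cmod d * Rabs r + e.
Proof.
  intros H. replace y with (Cplus x (Cplus (Cmult d (RtoC (-r))) (Copp (Cminus (Cminus x y) (Cmult d (RtoC r)))))) by (rewrite RtoC_opp; ring).
  eapply Rle_trans. apply Cmod_triangle. eapply Rle_trans.
  apply Rplus_le_compat_l. apply Cmod_triangle.
  rewrite Cmod_mult, Cmod_R, Cmod_opp, Rabs_Ropp. lra.
Qed.

Lemma step_bnd x x' d r : x' = Cplus x (Cmult d (RtoC r)) ->
  Cmod x' <= Cmod x + Cmod d * Rabs r.
Proof. intros ->. eapply Rle_trans. apply Cmod_triangle. rewrite Cmod_mult, Cmod_R. lra. Qed.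

Lemma d_cont T' f t d : T' t -> is_delta_deriv T' f t d ->
  forall eta, 0 < eta -> exists del, 0 < del /\ forall s, T' s -> Rabs (t - s) < del ->
    Cmod (Cminus (f s) (f t)) <= eta.
Proof.
  intros Ht Hd eta Heta. pose proof (d_step T' f t d Ht Hd) as Hs.
  set (mu := sigma_ts T' t - t) in *.
  set (e := eta / (2 * (Rabs mu + 1))).
  assert (He : 0 < e). { unfold e. apply Rdiv_lt_0_compat; [lra|]. pose proof (Rabs_pos mu); lra. }
  destruct (Hd e He) as [d0 [Hd0 H]].
  set (c := eta / (2 * (Cmod d + 1))).
  assert (Hc : 0 < c). { unfold c. apply Rdiv_lt_0_compat; [lra|]. pose proof (Cmod_ge_0 d); lra. }
  exists (Rmin d0 (Rmin 1 c)). split; [apply Rmin_lt3; lra|].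
  intros s Hs' Hts.
  assert (h1 : Rabs (t - s) < d0) by (eapply Rlt_le_trans; [apply Hts| apply Rmin_l]).
  assert (h2 : Rabs (t - s) < 1) by (eapply Rlt_le_trans; [apply Hts| eapply Rle_trans; [apply Rmin_r|apply Rmin_l]]).
  assert (h3 : Rabs (t - s) < c) by (eapply Rlt_le_trans; [apply Hts| eapply Rle_trans; [apply Rmin_r|apply Rmin_r]]).
  specialize (H s Hs' h1).
  set (X := Cminus (Cminus (f (sigma_ts T' t)) (f s)) (Cmult d (RtoC (sigma_ts T' t - s)))) in *.
  assert (E : Cminus (f s) (f t) = Cplus (Copp X) (Cmult d (RtoC (s - t)))).
  { unfold X. rewrite Hs. unfold mu. rewrite !RtoC_minus. ring. }
  rewrite E. eapply Rle_trans. apply Cmod_triangle. rewrite Cmod_opp, Cmod_mult, Cmod_R.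
  assert (Rabs (sigma_ts T' t - s) <= Rabs mu + 1).
  { replace (sigma_ts T' t - s) with (mu + (t - s)) by (unfold mu; ring).
    eapply Rle_trans. apply Rabs_triang. lra. }
  assert (e * Rabs (sigma_ts T' t - s) <= eta / 2).
  { apply Rle_trans with (e * (Rabs mu + 1)). apply Rmult_le_compat_l; lra.
    unfold e. right. field. pose proof (Rabs_pos mu); lra. }
  assert (Cmod d * Rabs (s - t) <= eta / 2).
  { rewrite Rabs_minus_sym. apply Rle_trans with (Cmod d * c).
    apply Rmult_le_compat_l. apply Cmod_ge_0. lra.
    apply Rle_trans with ((Cmod d + 1) * c).
    apply Rmult_le_compat_r; lra. unfold c. right. field. pose proof (Cmod_ge_0 d); lra. }
  lra.
Qed.

Lemma sup_facts T : is_time_scale T -> bounded_set T ->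
  T (sup_ts T) /\ forall t, T t -> t <= sup_ts T.
Proof.
  intros HT HB. destruct (bnd_up T HB) as [B HBu]. destruct HT as [[t0 Ht0] Hc].
  destruct (lub_ex T t0 B Ht0 HBu) as [l [Hq [Hu Hl]]].
  unfold sup_ts. rewrite Hq. split; auto.
  apply (lub_in T T l); auto. split; eauto.
Qed.

Lemma inf_facts T : is_time_scale T -> bounded_set T ->
  T (inf_ts T) /\ forall t, T t -> inf_ts T <= t.
Proof.
  intros HT HB. destruct (bnd_lo T HB) as [B HBu]. destruct HT as [[t0 Ht0] Hc].
  destruct (glb_ex T t0 B Ht0 HBu) as [l [Hq [Hu Hl]]].
  unfold inf_ts. rewrite Hq. split; auto.
  apply (glb_in T T l); auto. split; eauto.
Qed.

Lemma rho_facts T : is_time_scale T -> bounded_set T ->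
  T (rho_ts T (sup_ts T)) /\ rho_ts T (sup_ts T) <= sup_ts T /\
  forall t, T t -> t < sup_ts T -> t <= rho_ts T (sup_ts T).
Proof.
  intros HT HB. destruct (sup_facts T HT HB) as [HM HMu].
  set (M := sup_ts T) in *.
  destruct (classic (exists s, T s /\ s < M)) as [[s0 [H1 H2]]|Hn].
  - destruct (lub_ex (fun s => T s /\ s < M) s0 M) as [l [Hq [Hu Hl]]];
      [auto | intros x [_ Hx]; lra |].
    unfold rho_ts. rewrite Hq. split; [|split].
    + apply (lub_in T (fun s => T s /\ s < M) l); auto. intros x [Hx _]; auto.
    + apply Hl. intros x [_ Hx]; lra.
    + intros t Ht Htm. apply Hu. auto.
  - unfold rho_ts. rewrite lub_empty. split; [auto|split; [lra|]].
    + intros t Ht Htm. exfalso. apply Hn. eauto.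
    + intros x Hx. apply Hn. eauto.
Qed.

Lemma rho_dense T : is_time_scale T -> bounded_set T ->
  inf_ts T <> rho_ts T (sup_ts T) -> rho_ts T (sup_ts T) = sup_ts T ->
  forall d, 0 < d -> exists s, T s /\ sup_ts T - d < s /\ s < sup_ts T.
Proof.
  intros HT HB Hne Heq d Hd. destruct (sup_facts T HT HB) as [HM HMu].
  destruct (inf_facts T HT HB) as [Hm Hmu].
  set (M := sup_ts T) in *. 
  assert (Hlt : inf_ts T < M). { specialize (HMu _ Hm). rewrite Heq in Hne. destruct HMu; auto. congruence. }
  destruct (lub_ex (fun s => T s /\ s < M) (inf_ts T) M) as [l [Hq [Hu Hl]]];
      [auto | intros x [_ Hx]; lra |].
  assert (l = M). { rewrite <- Heq. unfold rho_ts. fold M. rewrite Hq. auto. }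
  subst l. destruct (lub_approx _ M Hl d Hd) as [x [[Hx1 Hx2] Hx3]]. eauto.
Qed.

Lemma kappa_iff T t : is_time_scale T -> bounded_set T ->
  (kappa_ts T t <-> T t /\ t <= rho_ts T (sup_ts T)).
Proof.
  intros HT HB. destruct (sup_facts T HT HB) as [HM HMu].
  destruct (rho_facts T HT HB) as [Hb [HbM Hbu]].
  unfold kappa_ts. split.
  - intros [Ht Hn]. split; auto. apply Rnot_lt_le. intro Hc. apply Hn. split; auto.
  - intros [Ht Hle]. split; auto. intros [H1 H2]. lra.
Qed.

Lemma sup_kappa T : is_time_scale T -> bounded_set T ->
  sup_ts (kappa_ts T) = rho_ts T (sup_ts T).
Proof.
  intros HT HB. destruct (rho_facts T HT HB) as [Hb [HbM Hbu]].
  set (be := rho_ts T (sup_ts T)) in *.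
  assert (Hk : kappa_ts T be) by (apply kappa_iff; auto; split; auto; unfold be; lra).
  destruct (lub_ex (kappa_ts T) be be Hk) as [l [Hq [Hu Hl]]].
  { intros x Hx. apply kappa_iff in Hx; tauto. }
  unfold sup_ts. rewrite Hq. apply Rle_antisym.
  - apply Hl. intros x Hx. apply kappa_iff in Hx; tauto.
  - apply Hu; auto.
Qed.

Lemma kappa2_intro T t : is_time_scale T -> bounded_set T -> kappa_ts T t ->
  (forall d, 0 < d -> exists s, T s /\ t - d < s /\ s < rho_ts T (sup_ts T)) ->
  kappa_ts (kappa_ts T) t.
Proof.
  intros HT HB Ht Hd.
  change (kappa_ts T t /\ ~ (rho_ts (kappa_ts T) (sup_ts (kappa_ts T)) < t /\ t <= sup_ts (kappa_ts T))).
  split; auto. rewrite sup_kappa; auto.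
  set (be := rho_ts T (sup_ts T)) in *.
  destruct (Hd 1 Rlt_0_1) as [s0 [Hs1 [Hs2 Hs3]]].
  assert (Hk0 : kappa_ts T s0) by (apply kappa_iff; auto; split; auto; unfold be in Hs3; lra).
  destruct (lub_ex (fun s => kappa_ts T s /\ s < be) s0 be) as [l [Hq [Hu Hl]]];
      [auto | intros x [_ Hx]; lra |].
  unfold rho_ts. rewrite Hq. intros [Hc _].
  destruct (Hd (t - l)) as [s [Hs [Hs' Hs'']]]; [lra|].
  assert (kappa_ts T s) by (apply kappa_iff; auto; split; auto; unfold be in Hs''; lra).
  specialize (Hu s (conj H Hs'')). lra.
Qed.

Definition pack T a lam (z z1 z2 : R -> C) : Prop :=
  is_time_scale T /\ bounded_set T /\ kappa_ts T a /\
  (forall t, kappa_ts T t -> is_delta_deriv T z t (z1 t)) /\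
  (forall t, kappa_ts (kappa_ts T) t -> is_delta_deriv (kappa_ts T) z1 t (z2 t) /\
        z2 t = Copp (Cmult lam (z (sigma_ts T t)))) /\
  z a = RtoC 0 /\ z1 a = RtoC 0.

Definition phi (z z1 : R -> C) t := Cmod (z t) + Cmod (z1 t).

Lemma K_exp l m : 0 <= l -> 0 <= m -> (1 + m) * (1 + l * m) <= exp ((1 + l + 1) * m).
Proof.
  intros Hl Hm. apply Rle_trans with (exp m * exp (l * m)).
  - apply Rmult_le_compat; try nra. apply exp_ineq1_le. apply exp_ineq1_le.
  - rewrite <- exp_plus. destruct (Req_dec m 0).
    + subst. replace (0 + l * 0) with 0 by ring. replace ((1 + l + 1) * 0) with 0 by ring. lra.
    + left. apply exp_increasing. nra.
Qed.

Lemma step_lemma T a lam z z1 z2 c s0 : pack T a lam z z1 z2 ->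
  kappa_ts T c -> T s0 -> c < s0 -> s0 <= rho_ts T (sup_ts T) ->
  (forall s, T s -> c < s -> s0 <= s) ->
  phi z z1 s0 <= (1 + (s0 - c)) * (1 + Cmod lam * (s0 - c)) * phi z z1 c /\
  phi z z1 c <= (1 + (s0 - c)) * (1 + Cmod lam * (s0 - c)) * phi z z1 s0.
Proof.
  intros [HT [HB [Ha [Hd1 [Hd2 [Hz Hz1]]]]]] Hc Hs0 Hcs Hsb Hno.
  assert (Hk2 : kappa_ts (kappa_ts T) c).
  { apply kappa2_intro; auto. intros d Hd. exists c. split; [apply Hc|]. lra. }
  assert (Hks0 : kappa_ts T s0) by (apply kappa_iff; auto).
  assert (Hsig : sigma_ts T c = s0) by (apply sig_rs; auto).
  assert (Hsig2 : sigma_ts (kappa_ts T) c = s0).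
  { apply sig_rs; auto. intros s Hs Hcs'. apply Hno; auto. apply Hs. }
  destruct (Hd2 c Hk2) as [Hd2c He].
  pose proof (d_step T z c (z1 c) (proj1 Hc) (Hd1 c Hc)) as S1.
  pose proof (d_step (kappa_ts T) z1 c (z2 c) Hc Hd2c) as S2.
  rewrite Hsig in S1, He. rewrite Hsig2 in S2.
  set (m := s0 - c) in *. set (l := Cmod lam).
  assert (Hm : 0 < m) by (unfold m; lra).
  assert (Hl : 0 <= l) by apply Cmod_ge_0.
  assert (Ram : Rabs m = m) by (apply Rabs_right; lra).
  unfold phi.
  pose proof (Cmod_ge_0 (z c)). pose proof (Cmod_ge_0 (z1 c)).
  pose proof (Cmod_ge_0 (z s0)). pose proof (Cmod_ge_0 (z1 s0)).
  split.
  - pose proof (step_bnd _ _ _ _ S1) as B1. rewrite Ram in B1.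
    pose proof (step_bnd _ _ _ _ S2) as B2. rewrite Ram in B2.
    rewrite He, Cmod_opp, Cmod_mult in B2. fold l in B2.
    assert (l * m * Cmod (z s0) <= l * m * (Cmod (z c) + Cmod (z1 c) * m)).
    { apply Rmult_le_compat_l; nra. }
    assert (0 <= l * m * m * Cmod (z1 c)) by (repeat apply Rmult_le_pos; lra).
    assert (0 <= l * m * Cmod (z c)) by (repeat apply Rmult_le_pos; lra).
    assert (0 <= l * m * Cmod (z1 c)) by (repeat apply Rmult_le_pos; lra).
    assert (0 <= m * Cmod (z c)) by (repeat apply Rmult_le_pos; lra).
    assert (0 <= l * m * m * Cmod (z c)) by (repeat apply Rmult_le_pos; lra).
    clearbody m l. nra.
  - assert (E1 : z1 c = Cplus (z1 s0) (Cmult (Cmult lam (z s0)) (RtoC m))).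
    { rewrite S2, He. ring. }
    assert (E2 : z c = Cplus (z s0) (Cmult (Copp (z1 c)) (RtoC m))).
    { rewrite S1. ring. }
    pose proof (step_bnd _ _ _ _ E1) as B1. rewrite Ram, Cmod_mult in B1. fold l in B1.
    pose proof (step_bnd _ _ _ _ E2) as B2. rewrite Ram, Cmod_opp in B2.
    assert (m * Cmod (z1 c) <= m * (Cmod (z1 s0) + l * Cmod (z s0) * m)).
    { apply Rmult_le_compat_l; nra. }
    assert (0 <= l * m * m * Cmod (z s0)) by (repeat apply Rmult_le_pos; lra).
    assert (0 <= l * m * Cmod (z s0)) by (repeat apply Rmult_le_pos; lra).
    assert (0 <= l * m * Cmod (z1 s0)) by (repeat apply Rmult_le_pos; lra).
    assert (0 <= m * Cmod (z s0)) by (repeat apply Rmult_le_pos; lra).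
    assert (0 <= m * Cmod (z1 s0)) by (repeat apply Rmult_le_pos; lra).
    assert (0 <= l * m * m * Cmod (z1 s0)) by (repeat apply Rmult_le_pos; lra).
    clearbody m l. nra.
Qed.

Lemma rd_lemma T a lam z z1 z2 c : pack T a lam z z1 z2 ->
  kappa_ts T c -> c < rho_ts T (sup_ts T) ->
  (forall d, 0 < d -> exists s, T s /\ c < s /\ s < c + d) ->
  forall eta, 0 < eta -> exists del, 0 < del /\ forall s, T s -> c < s -> s < c + del ->
    phi z z1 s <= phi z z1 c + ((1 + Cmod lam) * phi z z1 c + 2 * eta) * (s - c) /\
    phi z z1 c <= phi z z1 s + ((1 + Cmod lam) * phi z z1 c + 2 * eta) * (s - c).
Proof.
  intros P. pose proof P as [HT [HB [Ha [Hd1 [Hd2 [Hz Hz1]]]]]].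
  intros Hc Hcb Hrd eta Heta.
  set (be := rho_ts T (sup_ts T)) in *.
  assert (Hk2 : kappa_ts (kappa_ts T) c).
  { apply kappa2_intro; auto. intros d Hd. exists c. split; [apply Hc|]. unfold be in Hcb. lra. }
  assert (Hsig : sigma_ts T c = c) by (apply sig_rd; auto).
  assert (Hsig2 : sigma_ts (kappa_ts T) c = c).
  { apply sig_rd. intros d Hd. destruct (Hrd (Rmin d (be - c))) as [s [Hs [H1 H2]]].
    apply Rmin_pos; lra. exists s. split; [|split; auto].
    - apply kappa_iff; auto. split; auto. pose proof (Rmin_r d (be - c)). unfold be in *; lra.
    - pose proof (Rmin_l d (be - c)). lra. }
  destruct (Hd1 c Hc eta Heta) as [d1 [Hd1p D1]].
  destruct (Hd2 c Hk2) as [Hd2c He].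
  destruct (Hd2c eta Heta) as [d2 [Hd2p D2]].
  rewrite Hsig in D1, He. rewrite Hsig2 in D2.
  exists (Rmin d1 (Rmin d2 (be - c))). split; [apply Rmin_lt3; lra|].
  intros s Hs Hcs Hsd.
  pose proof (Rmin_l d1 (Rmin d2 (be - c))). pose proof (Rmin_r d1 (Rmin d2 (be - c))).
  pose proof (Rmin_l d2 (be - c)). pose proof (Rmin_r d2 (be - c)).
  assert (Hab : Rabs (c - s) = s - c) by (rewrite Rabs_minus_sym; apply Rabs_right; lra).
  assert (Hks : kappa_ts T s) by (apply kappa_iff; auto; split; auto; unfold be in *; lra).
  assert (X1 := D1 s Hs ltac:(rewrite Hab; lra)).
  assert (X2 := D2 s Hks ltac:(rewrite Hab; lra)).
  rewrite Hab in X1, X2.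
  pose proof (est_l _ _ _ _ _ X1) as A1. pose proof (est_r _ _ _ _ _ X1) as A2.
  pose proof (est_l _ _ _ _ _ X2) as A3. pose proof (est_r _ _ _ _ _ X2) as A4.
  rewrite Hab in A1, A2, A3, A4.
  rewrite He, Cmod_opp, Cmod_mult in A3, A4.
  unfold phi.
  pose proof (Cmod_ge_0 lam). pose proof (Cmod_ge_0 (z c)). pose proof (Cmod_ge_0 (z1 c)).
  assert (0 < s - c) by lra.
  set (l := Cmod lam) in *. set (h := s - c) in *.
  assert (0 <= (Cmod (z c) + l * Cmod (z1 c)) * h) by (apply Rmult_le_pos; [nra|lra]).
  clearbody l h. split; nra.
Qed.

Lemma diff_bnd x y e : Cmod (Cminus x y) <= e -> Cmod y <= Cmod x + e /\ Cmod x <= Cmod y + e.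
Proof.
  intros H. split.
  - replace y with (Cplus x (Copp (Cminus x y))) by ring.
    eapply Rle_trans. apply Cmod_triangle. rewrite Cmod_opp. lra.
  - replace x with (Cplus y (Cminus x y)) by ring.
    eapply Rle_trans. apply Cmod_triangle. lra.
Qed.

Lemma cont_lemma T a lam z z1 z2 c : pack T a lam z z1 z2 ->
  kappa_ts T c ->
  (forall d, 0 < d -> exists s, T s /\ c - d < s /\ s < c) ->
  forall eta, 0 < eta -> exists del, 0 < del /\ forall s, T s -> s < c -> c - del < s ->
    phi z z1 c <= phi z z1 s + eta /\ phi z z1 s <= phi z z1 c + eta.
Proof.
  intros P. pose proof P as [HT [HB [Ha [Hd1 [Hd2 [Hz Hz1]]]]]].
  intros Hc Hld eta Heta.
  pose proof (proj1 (kappa_iff T c HT HB) Hc) as [Hct Hcb] .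
  assert (Hk2 : kappa_ts (kappa_ts T) c).
  { apply kappa2_intro; auto. intros d Hd. destruct (Hld d Hd) as [s [H1 [H2 H3]]].
    exists s. split; auto. split; auto. lra. }
  destruct (Hd2 c Hk2) as [Hd2c _].
  destruct (d_cont T z c (z1 c) Hct (Hd1 c Hc) (eta/2)) as [d1 [Hd1p D1]]; [lra|].
  destruct (d_cont (kappa_ts T) z1 c (z2 c) Hc Hd2c (eta/2)) as [d2 [Hd2p D2]]; [lra|].
  exists (Rmin d1 d2). split; [apply Rmin_pos; lra|].
  intros s Hs Hsc Hsd.
  pose proof (Rmin_l d1 d2). pose proof (Rmin_r d1 d2).
  assert (Hab : Rabs (c - s) = c - s) by (apply Rabs_right; lra).
  assert (Hks : kappa_ts T s) by (apply kappa_iff; auto; split; auto; lra).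
  assert (X1 := D1 s Hs ltac:(rewrite Hab; lra)).
  assert (X2 := D2 s Hks ltac:(rewrite Hab; lra)).
  apply diff_bnd in X1. apply diff_bnd in X2. unfold phi. lra.
Qed.

Lemma exp_split L x y : exp (L * (x - y)) = exp (L * (x - y) - L * 0).
Proof. f_equal. ring. Qed.

Lemma exp_mul3 L c a f : exp (L * (f - a)) = exp (L * (c - a)) * exp (L * (f - c)).
Proof. rewrite <- exp_plus. f_equal. ring. Qed.

Lemma fwd T a lam z z1 z2 : pack T a lam z z1 z2 ->
  forall eps, 0 < eps -> forall t, kappa_ts T t -> a <= t ->
  phi z z1 t <= eps * exp ((1 + Cmod lam + 1) * (t - a)).
Proof.
  intros P. pose proof P as [HT [HB [Ha [Hd1 [Hd2 [Hz Hz1]]]]]].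
  intros eps Heps t Ht Hat.
  set (L := 1 + Cmod lam + 1).
  assert (HL : 1 <= L) by (unfold L; pose proof (Cmod_ge_0 lam); lra).
  destruct (Rle_lt_dec (phi z z1 t) (eps * exp (L * (t - a)))) as [ok|bad]; auto. exfalso.
  set (F := fun x => kappa_ts T x /\ a <= x /\ eps * exp (L * (x - a)) < phi z z1 x).
  destruct (glb_ex F t a) as [c [_ [Hu Hl]]].
  { split; auto. } { intros x [_ [Hx _]]; auto. }
  assert (Hca : a <= c) by (apply Hl; intros x [_ [Hx _]]; auto).
  assert (Hct : c <= t) by (apply Hu; split; auto).
  assert (HcT : T c).
  { apply (glb_in T F c HT); auto. intros x [Hx _]. apply Hx. }
  destruct (rho_facts T HT HB) as [Hb [HbM Hbu]].
  set (be := rho_ts T (sup_ts T)) in *.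
  assert (Htb : t <= be) by (apply (kappa_iff T t HT HB) in Ht; tauto).
  assert (Hc : kappa_ts T c) by (apply kappa_iff; auto; split; auto; unfold be in *; lra).
  assert (Hbelow : forall x, kappa_ts T x -> a <= x -> x < c -> phi z z1 x <= eps * exp (L * (x - a))).
  { intros x Hx Hax Hxc. apply Rnot_lt_le. intro Hc'. assert (c <= x) by (apply Hu; split; auto). lra. }
  assert (Hphia : phi z z1 a = 0) by (unfold phi; rewrite Hz, Hz1, Cmod_0; ring).
  pose proof (Cmod_ge_0 lam) as Hlam.
  destruct (Rle_lt_dec (phi z z1 c) (eps * exp (L * (c - a)))) as [Hok|Hbad].
  - assert (Hacc : forall d, 0 < d -> exists f, F f /\ c < f /\ f < c + d).
    { intros d Hd. destruct (glb_approx F c Hl d Hd) as [f [Hf Hfd]].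
      exists f. split; auto. split; auto. pose proof (Hu f Hf).
      destruct H; auto. subst f. destruct Hf as [_ [_ Hf]]. lra. }
    assert (Hcb : c < be).
    { destruct (Hacc 1 Rlt_0_1) as [f [[Hf _] [H1 _]]].
      apply (kappa_iff T f HT HB) in Hf. unfold be in *. lra. }
    assert (Hrd : forall d, 0 < d -> exists s, T s /\ c < s /\ s < c + d).
    { intros d Hd. destruct (Hacc d Hd) as [f [[Hf _] [H1 H2]]]. exists f. split; [apply Hf|]. auto. }
    set (X := eps * exp (L * (c - a))).
    assert (HX : 0 < X) by (unfold X; pose proof (exp_pos (L * (c - a))); nra).
    destruct (rd_lemma T a lam z z1 z2 c P Hc Hcb Hrd (X / 2)) as [d0 [Hd0 R0]]; [lra|].
    destruct (Hacc d0 Hd0) as [f [[Hfk [Haf Hff]] [H1 H2]]].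
    destruct (R0 f (proj1 Hfk) H1 H2) as [R1 _].
    rewrite (exp_mul3 L c a f) in Hff.
    pose proof (exp_ineq1_le (L * (f - c))) as HY.
    set (Y := exp (L * (f - c))) in *. fold X in Hok.
    replace (eps * (exp (L * (c - a)) * Y)) with (X * Y) in Hff by (unfold X; ring).
    assert (HA : (1 + Cmod lam) * phi z z1 c * (f - c) <= (1 + Cmod lam) * X * (f - c)).
    { apply Rmult_le_compat_r. lra. apply Rmult_le_compat_l; lra. }
    assert (HB2 : X * (1 + L * (f - c)) <= X * Y) by (apply Rmult_le_compat_l; lra).
    unfold L in HB2. nra.
  - assert (Hac : a < c).
    { destruct Hca as [|Heq]; auto. subst c. rewrite Hphia in Hbad.
      pose proof (exp_pos (L * (a - a))). nra. }
    destruct (classic (forall d, 0 < d -> exists s, T s /\ c - d < s /\ s < c)) as [LD|NLD].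
    + destruct (cont_lemma T a lam z z1 z2 c P Hc LD ((phi z z1 c - eps * exp (L * (c - a))) / 2))
        as [d0 [Hd0 C0]]; [lra|].
      destruct (LD (Rmin d0 (c - a))) as [s [Hs [H1 H2]]]; [apply Rmin_pos; lra|].
      pose proof (Rmin_l d0 (c - a)). pose proof (Rmin_r d0 (c - a)).
      assert (Hks : kappa_ts T s) by (apply kappa_iff; auto; split; auto; unfold be in *; lra).
      pose proof (Hbelow s Hks ltac:(lra) H2).
      destruct (C0 s Hs H2 ltac:(lra)) as [C1 _].
      assert (exp (L * (s - a)) <= exp (L * (c - a))).
      { left. apply exp_increasing. nra. }
      nra.
    + apply not_all_ex_not in NLD as [d Hd]. apply imply_to_and in Hd as [Hdp Hd].
      destruct (lub_ex (fun s => T s /\ s < c) a c) as [r [_ [Hur Hlr]]].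
      { split; auto. apply Ha. } { intros x [_ Hx]; lra. }
      assert (Tr : T r).
      { apply (lub_in T (fun s => T s /\ s < c) r HT); auto. intros x [Hx _]; auto. }
      assert (Hrle : r <= c - d).
      { apply Hlr. intros x [Hx1 Hx2]. apply Rnot_lt_le. intro. apply Hd. exists x. auto. }
      assert (Har : a <= r) by (apply Hur; split; [apply Ha|lra]).
      assert (Hno : forall s, T s -> r < s -> c <= s).
      { intros s Hs Hrs. apply Rnot_lt_le. intro. pose proof (Hur s (conj Hs H)). lra. }
      assert (Hkr : kappa_ts T r) by (apply kappa_iff; auto; split; auto; unfold be in *; lra).
      destruct (step_lemma T a lam z z1 z2 r c P Hkr HcT ltac:(lra) ltac:(unfold be in *; lra) Hno)
        as [S1 _].
      pose proof (Hbelow r Hkr Har ltac:(lra)) as Hr.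
      pose proof (K_exp (Cmod lam) (c - r) Hlam ltac:(lra)) as HK. fold L in HK.
      rewrite (exp_mul3 L r a c) in Hbad.
      set (K := (1 + (c - r)) * (1 + Cmod lam * (c - r))) in *.
      assert (0 <= K) by (unfold K; apply Rmult_le_pos; nra).
      assert (K * phi z z1 r <= K * (eps * exp (L * (r - a)))) by (apply Rmult_le_compat_l; auto).
      assert (K * (eps * exp (L * (r - a))) <= exp (L * (c - r)) * (eps * exp (L * (r - a)))).
      { apply Rmult_le_compat_r; auto. pose proof (exp_pos (L * (r - a))). nra. }
      nra.
Qed.

Lemma rd_contra k x y W Y h : 1 <= k -> 0 < W -> W * Y <= x ->
  x <= y + (k * x + W * Y / 2) * h -> y < W -> 1 + (k + 1) * h <= Y -> 0 < h ->
  h < 1 / (2 * (k + 1) ^ 2) -> False.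
Proof.
  intros Hk HW HA Hx Hy HY Hh Hh0.
  assert (Hkk : 0 < 2 * (k + 1) ^ 2) by nra.
  assert (Hh1 : h * (2 * (k + 1) ^ 2) < 1).
  { apply Rmult_lt_compat_r with (r := 2 * (k + 1) ^ 2) in Hh0; auto.
    unfold Rdiv in Hh0. rewrite Rmult_1_l, Rinv_l in Hh0; lra. }
  assert (Hkh : k * h < 1 / 2) by nra.
  assert (HY1 : 1 <= Y) by nra.
  set (A := W * Y) in *.
  assert (HA0 : 0 < A) by (unfold A; nra).
  assert (H1 : A * (1 - k * h) <= x * (1 - k * h)) by (apply Rmult_le_compat_r; nra).
  assert (H2 : A * (1 - k * h - h / 2) < W) by nra.
  assert (H3 : Y * (1 - k * h - h / 2) < 1).
  { unfold A in H2. apply Rmult_lt_reg_l with W; auto. nra. }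
  assert (H4 : (1 + (k + 1) * h) * (1 - k * h - h / 2) < 1).
  { apply Rle_lt_trans with (Y * (1 - k * h - h / 2)); auto.
    apply Rmult_le_compat_r; nra. }
  nra.
Qed.

Lemma bwd T a lam z z1 z2 : pack T a lam z z1 z2 ->
  forall eps, 0 < eps -> forall t, kappa_ts T t -> t <= a ->
  phi z z1 t < eps * exp ((1 + Cmod lam + 1) * (a - t)).
Proof.
  intros P. pose proof P as [HT [HB [Ha [Hd1 [Hd2 [Hz Hz1]]]]]].
  intros eps Heps t Ht Hta.
  set (L := 1 + Cmod lam + 1).
  pose proof (Cmod_ge_0 lam) as Hlam.
  assert (HL : 1 <= L) by (unfold L; lra).
  destruct (Rlt_le_dec (phi z z1 t) (eps * exp (L * (a - t)))) as [ok|bad]; auto. exfalso.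
  set (F := fun x => kappa_ts T x /\ x <= a /\ eps * exp (L * (a - x)) <= phi z z1 x).
  destruct (lub_ex F t a) as [c [_ [Hu Hl]]].
  { split; auto. } { intros x [_ [Hx _]]; auto. }
  assert (Hca : c <= a) by (apply Hl; intros x [_ [Hx _]]; auto).
  assert (Htc : t <= c) by (apply Hu; split; auto).
  assert (HcT : T c).
  { apply (lub_in T F c HT); auto. intros x [Hx _]. apply Hx. }
  destruct (rho_facts T HT HB) as [Hb [HbM Hbu]].
  set (be := rho_ts T (sup_ts T)) in *.
  assert (Hab : a <= be) by (apply (kappa_iff T a HT HB) in Ha; tauto).
  assert (Hc : kappa_ts T c) by (apply kappa_iff; auto; split; auto; unfold be in *; lra).
  assert (Habove : forall x, kappa_ts T x -> x <= a -> c < x -> phi z z1 x < eps * exp (L * (a - x))).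
  { intros x Hx Hax Hxc. apply Rnot_le_lt. intro Hc'. assert (x <= c) by (apply Hu; split; auto). lra. }
  assert (Hphia : phi z z1 a = 0) by (unfold phi; rewrite Hz, Hz1, Cmod_0; ring).
  destruct (Rlt_le_dec (phi z z1 c) (eps * exp (L * (a - c)))) as [Hok|Hbad].
  - assert (Hacc : forall d, 0 < d -> exists f, F f /\ c - d < f /\ f < c).
    { intros d Hd. destruct (lub_approx F c Hl d Hd) as [f [Hf Hfd]].
      exists f. split; auto. split; auto. pose proof (Hu f Hf).
      destruct H; auto. subst f. destruct Hf as [_ [_ Hf]]. lra. }
    assert (LD : forall d, 0 < d -> exists s, T s /\ c - d < s /\ s < c).
    { intros d Hd. destruct (Hacc d Hd) as [f [[Hf _] [H1 H2]]]. exists f. split; [apply Hf|]. auto. }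
    destruct (cont_lemma T a lam z z1 z2 c P Hc LD ((eps * exp (L * (a - c)) - phi z z1 c) / 2))
        as [d0 [Hd0 C0]]; [lra|].
    destruct (Hacc d0 Hd0) as [f [[Hfk [Hfa Hff]] [H1 H2]]].
    destruct (C0 f (proj1 Hfk) H2 H1) as [_ C1].
    assert (exp (L * (a - c)) <= exp (L * (a - f))).
    { left. apply exp_increasing. nra. }
    nra.
  - assert (Hac : c < a).
    { destruct Hca as [|Heq]; auto. subst c. rewrite Hphia in Hbad.
      pose proof (exp_pos (L * (a - a))). nra. }
    destruct (sig_cases T c HT) as [Hrd|[[s0 [Hs0 [Hcs0 Hno]]]|Htop]].
    + assert (Hcb : c < be) by lra.
      set (W0 := eps * exp (L * (a - c))).
      assert (HW0 : 0 < W0) by (unfold W0; pose proof (exp_pos (L * (a - c))); nra).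
      destruct (rd_lemma T a lam z z1 z2 c P Hc Hcb Hrd (W0 / 4)) as [d0 [Hd0 R0]]; [lra|].
      set (k := 1 + Cmod lam).
      assert (Hh0 : 0 < 1 / (2 * (k + 1) ^ 2)).
      { apply Rdiv_lt_0_compat; [lra|]. unfold k; nra. }
      destruct (Hrd (Rmin d0 (Rmin (a - c) (1 / (2 * (k + 1) ^ 2))))) as [s [Hs [H1 H2]]].
      { apply Rmin_lt3; lra. }
      pose proof (Rmin_l d0 (Rmin (a - c) (1 / (2 * (k + 1) ^ 2)))).
      pose proof (Rmin_r d0 (Rmin (a - c) (1 / (2 * (k + 1) ^ 2)))).
      pose proof (Rmin_l (a - c) (1 / (2 * (k + 1) ^ 2))).
      pose proof (Rmin_r (a - c) (1 / (2 * (k + 1) ^ 2))).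
      assert (Hks : kappa_ts T s) by (apply kappa_iff; auto; split; auto; unfold be in *; lra).
      destruct (R0 s Hs H1 ltac:(lra)) as [_ R2].
      pose proof (Habove s Hks ltac:(lra) H1) as Hs'.
      assert (EE : exp (L * (a - c)) = exp (L * (a - s)) * exp (L * (s - c))).
      { rewrite <- exp_plus. f_equal. ring. }
      pose proof (exp_ineq1_le (L * (s - c))) as HY.
      apply (rd_contra k (phi z z1 c) (phi z z1 s) (eps * exp (L * (a - s))) (exp (L * (s - c))) (s - c)).
      * unfold k; lra.
      * pose proof (exp_pos (L * (a - s))); nra.
      * replace (eps * exp (L * (a - s)) * exp (L * (s - c))) with W0 by (unfold W0; rewrite EE; ring). unfold W0; lra.
      * replace (eps * exp (L * (a - s)) * exp (L * (s - c))) with W0 by (unfold W0; rewrite EE; ring).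
        replace (W0 / 2) with (2 * (W0 / 4)) by field. exact R2.
      * exact Hs'.
      * replace (k + 1) with L by (unfold k, L; ring). exact HY.
      * lra.
      * lra.
    + assert (Hs0a : s0 <= a) by (apply Hno; [apply Ha|lra]).
      destruct (step_lemma T a lam z z1 z2 c s0 P Hc Hs0 Hcs0 ltac:(unfold be in *; lra) Hno)
        as [_ S2].
      assert (Hks0 : kappa_ts T s0) by (apply kappa_iff; auto; split; auto; unfold be in *; lra).
      pose proof (Habove s0 Hks0 Hs0a Hcs0) as Hr.
      pose proof (K_exp (Cmod lam) (s0 - c) Hlam ltac:(lra)) as HK. fold L in HK.
      assert (EE : exp (L * (a - c)) = exp (L * (a - s0)) * exp (L * (s0 - c))).
      { rewrite <- exp_plus. f_equal. ring. }
      rewrite EE in Hbad.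
      set (K := (1 + (s0 - c)) * (1 + Cmod lam * (s0 - c))) in *.
      assert (1 <= K) by (unfold K; assert (0 <= Cmod lam * (s0 - c)) by (apply Rmult_le_pos; lra); nra).
      assert (K * phi z z1 s0 < K * (eps * exp (L * (a - s0)))) by (apply Rmult_lt_compat_l; lra).
      assert (K * (eps * exp (L * (a - s0))) <= exp (L * (s0 - c)) * (eps * exp (L * (a - s0)))).
      { apply Rmult_le_compat_r; auto. pose proof (exp_pos (L * (a - s0))). nra. }
      nra.
    + pose proof (Htop a (proj1 Ha)). lra.
Qed.

Lemma uniq T a lam z z1 z2 : pack T a lam z z1 z2 ->
  forall t, kappa_ts T t -> z t = RtoC 0 /\ z1 t = RtoC 0.
Proof.
  intros P t Ht.
  assert (H0 : phi z z1 t = 0).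
  { destruct (Rle_lt_dec a t) as [Hat|Hta].
    - apply small0 with (exp ((1 + Cmod lam + 1) * (t - a))).
      + unfold phi. pose proof (Cmod_ge_0 (z t)). pose proof (Cmod_ge_0 (z1 t)). lra.
      + left. apply exp_pos.
      + intros e He. apply (fwd T a lam z z1 z2 P e He t Ht Hat).
    - apply small0 with (exp ((1 + Cmod lam + 1) * (a - t))).
      + unfold phi. pose proof (Cmod_ge_0 (z t)). pose proof (Cmod_ge_0 (z1 t)). lra.
      + left. apply exp_pos.
      + intros e He. left. apply (bwd T a lam z z1 z2 P e He t Ht). lra. }
  unfold phi in H0. pose proof (Cmod_ge_0 (z t)). pose proof (Cmod_ge_0 (z1 t)).
  split; apply Cmod_eq_0; lra.
Qed.

Lemma uniq_T T a lam z z1 z2 : pack T a lam z z1 z2 ->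
  forall t, T t -> z t = RtoC 0.
Proof.
  intros P t Ht. pose proof P as [HT [HB [Ha [Hd1 [Hd2 [Hz Hz1]]]]]].
  destruct (classic (kappa_ts T t)) as [Hk|Hk].
  - apply (uniq T a lam z z1 z2 P t Hk).
  - destruct (sup_facts T HT HB) as [HM HMu].
    destruct (rho_facts T HT HB) as [Hb [HbM Hbu]].
    assert (Htb : rho_ts T (sup_ts T) < t).
    { apply Rnot_le_lt. intro. apply Hk. apply kappa_iff; auto. }
    assert (HtM : t = sup_ts T).
    { destruct (HMu t Ht) as [Hlt|]; auto. pose proof (Hbu t Ht Hlt). lra. }
    assert (Hkb : kappa_ts T (rho_ts T (sup_ts T))) by (apply kappa_iff; auto; split; auto; lra).
    assert (Hsig : sigma_ts T (rho_ts T (sup_ts T)) = sup_ts T).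
    { apply sig_rs; auto. lra. intros s Hs Hbs. apply Rnot_lt_le. intro. pose proof (Hbu s Hs H). lra. }
    pose proof (d_step T z _ _ Hb (Hd1 _ Hkb)) as S.
    rewrite Hsig in S. destruct (uniq T a lam z z1 z2 P _ Hkb) as [E1 E2].
    rewrite HtM, S, E1, E2. ring.
Qed.

Lemma deriv_lin T' f g h df dg dh t a1 a2 a3 :
  is_delta_deriv T' f t df -> is_delta_deriv T' g t dg -> is_delta_deriv T' h t dh ->
  is_delta_deriv T' (fun x => Cplus (Cplus (Cmult a1 (f x)) (Cmult a2 (g x))) (Cmult a3 (h x))) t
    (Cplus (Cplus (Cmult a1 df) (Cmult a2 dg)) (Cmult a3 dh)).
Proof.
  intros Hf Hg Hh e He.
  set (N := 1 + Cmod a1 + Cmod a2 + Cmod a3).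
  pose proof (Cmod_ge_0 a1). pose proof (Cmod_ge_0 a2). pose proof (Cmod_ge_0 a3).
  assert (HN : 0 < N) by (unfold N; lra).
  assert (He' : 0 < e / N) by (apply Rdiv_lt_0_compat; lra).
  destruct (Hf _ He') as [d1 [Hd1 F1]]. destruct (Hg _ He') as [d2 [Hd2 G1]].
  destruct (Hh _ He') as [d3 [Hd3 K1]].
  exists (Rmin d1 (Rmin d2 d3)). split; [apply Rmin_lt3; lra|].
  intros s Hs Hts.
  pose proof (Rmin_l d1 (Rmin d2 d3)). pose proof (Rmin_r d1 (Rmin d2 d3)).
  pose proof (Rmin_l d2 d3). pose proof (Rmin_r d2 d3).
  specialize (F1 s Hs ltac:(lra)). specialize (G1 s Hs ltac:(lra)). specialize (K1 s Hs ltac:(lra)).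
  set (sg := sigma_ts T' t) in *.
  set (Xf := Cminus (Cminus (f sg) (f s)) (Cmult df (RtoC (sg - s)))) in *.
  set (Xg := Cminus (Cminus (g sg) (g s)) (Cmult dg (RtoC (sg - s)))) in *.
  set (Xh := Cminus (Cminus (h sg) (h s)) (Cmult dh (RtoC (sg - s)))) in *.
  replace (Cminus (Cminus (Cplus (Cplus (Cmult a1 (f sg)) (Cmult a2 (g sg))) (Cmult a3 (h sg)))
     (Cplus (Cplus (Cmult a1 (f s)) (Cmult a2 (g s))) (Cmult a3 (h s))))
     (Cmult (Cplus (Cplus (Cmult a1 df) (Cmult a2 dg)) (Cmult a3 dh)) (RtoC (sg - s))))
   with (Cplus (Cplus (Cmult a1 Xf) (Cmult a2 Xg)) (Cmult a3 Xh)) by (unfold Xf, Xg, Xh; ring).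
  eapply Rle_trans. apply Cmod_triangle. eapply Rle_trans. apply Rplus_le_compat_r. apply Cmod_triangle.
  rewrite !Cmod_mult.
  set (r := Rabs (sg - s)) in *. pose proof (Rabs_pos (sg - s)). fold r in H6.
  assert (Cmod a1 * Cmod Xf <= Cmod a1 * (e / N * r)) by (apply Rmult_le_compat_l; auto).
  assert (Cmod a2 * Cmod Xg <= Cmod a2 * (e / N * r)) by (apply Rmult_le_compat_l; auto).
  assert (Cmod a3 * Cmod Xh <= Cmod a3 * (e / N * r)) by (apply Rmult_le_compat_l; auto).
  assert ((Cmod a1 + Cmod a2 + Cmod a3) * (e / N * r) <= e * r).
  { apply Rle_trans with (N * (e / N * r)).
    - apply Rmult_le_compat_r. apply Rmult_le_pos; lra. unfold N; lra.
    - right. field. lra. }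
  nra.
Qed.

Lemma sol_lin T q a lam y y1 g g1 h h1 a1 a2 a3 :
  is_solution T q a lam y y1 -> is_solution T q a lam g g1 -> is_solution T q a lam h h1 ->
  is_solution T q a lam
    (fun x => Cplus (Cplus (Cmult a1 (y x)) (Cmult a2 (g x))) (Cmult a3 (h x)))
    (fun x => Cplus (Cplus (Cmult a1 (y1 x)) (Cmult a2 (g1 x))) (Cmult a3 (h1 x))).
Proof.
  intros [Dy [y2 Ey]] [Dg [g2 Eg]] [Dh [h2 Eh]]. split.
  - intros t Ht. apply deriv_lin; auto.
  - exists (fun x => Cplus (Cplus (Cmult a1 (y2 x)) (Cmult a2 (g2 x))) (Cmult a3 (h2 x))).
    intros t Ht. destruct (Ey t Ht) as [Dy2 Ey2]. destruct (Eg t Ht) as [Dg2 Eg2].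
    destruct (Eh t Ht) as [Dh2 Eh2]. split.
    + apply deriv_lin; auto.
    + transitivity (Cplus (Cplus (Cmult a1 (Cplus (Copp (y2 t)) (Cmult (RtoC (q t)) (y a))))
                                 (Cmult a2 (Cplus (Copp (g2 t)) (Cmult (RtoC (q t)) (g a)))))
                          (Cmult a3 (Cplus (Copp (h2 t)) (Cmult (RtoC (q t)) (h a))))).
      * ring.
      * rewrite Ey2, Eg2, Eh2. ring.
Qed.

Lemma C1_neq0 : RtoC 1 <> RtoC 0.
Proof. intro H. apply (f_equal fst) in H. simpl in H. lra. Qed.

Lemma Cmult_eq0 x y : Cmult x y = RtoC 0 -> x = RtoC 0 \/ y = RtoC 0.
Proof.
  intro H. apply (f_equal Cmod) in H. rewrite Cmod_mult, Cmod_0 in H.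
  apply Rmult_integral in H as [H|H]; [left|right]; apply Cmod_eq_0; auto.
Qed.

Lemma pick UC US VC VS : Cminus (Cmult UC VS) (Cmult VC US) = RtoC 0 ->
  exists c1 c2, (c1 <> RtoC 0 \/ c2 <> RtoC 0) /\
    Cplus (Cmult c1 UC) (Cmult c2 US) = RtoC 0 /\
    Cplus (Cmult c1 VC) (Cmult c2 VS) = RtoC 0.
Proof.
  intros H. destruct (classic (UC = RtoC 0 /\ US = RtoC 0)) as [[H1 H2]|Hn].
  - destruct (classic (VC = RtoC 0 /\ VS = RtoC 0)) as [[H3 H4]|Hn'].
    + exists (RtoC 1), (RtoC 0). split; [left; apply C1_neq0|].
      rewrite H1, H2, H3, H4. split; ring.
    + exists VS, (Copp VC). split.
      * destruct (classic (VS = RtoC 0)) as [H5|H5]; [right|left; auto].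
        intro H6. apply Hn'. split; auto. replace VC with (Copp (Copp VC)) by ring.
        rewrite H6. ring.
      * rewrite H1, H2. split; ring.
  - exists US, (Copp UC). split.
    + destruct (classic (US = RtoC 0)) as [H5|H5]; [right|left; auto].
      intro H6. apply Hn. split; auto. replace UC with (Copp (Copp UC)) by ring.
      rewrite H6. ring.
    + split; [ring|].
      replace (Cplus (Cmult US VC) (Cmult (Copp UC) VS)) with (Copp (Cminus (Cmult UC VS) (Cmult VC US))) by ring.
      rewrite H. ring.
Qed.

Lemma deriv_zero_aux T' f t d : sigma_ts T' t = t ->
  (forall del, 0 < del -> exists s, T' s /\ s <> t /\ Rabs (t - s) < del) ->
  (forall s, T' s -> f s = RtoC 0) -> T' t ->
  is_delta_deriv T' f t d -> d = RtoC 0.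
Proof.
  intros Hsig Hpts Hf Ht Hd. apply Cmod_eq_0.
  apply small0 with 1; [apply Cmod_ge_0|lra|].
  intros e He. destruct (Hd e He) as [del [Hdel H]].
  destruct (Hpts del Hdel) as [s [Hs [Hst Hts]]].
  specialize (H s Hs Hts). rewrite Hsig, (Hf t Ht), (Hf s Hs) in H.
  replace (Cminus (Cminus (RtoC 0) (RtoC 0)) (Cmult d (RtoC (t - s)))) with
    (Copp (Cmult d (RtoC (t - s)))) in H by ring.
  rewrite Cmod_opp, Cmod_mult, Cmod_R in H.
  assert (0 < Rabs (t - s)) by (apply Rabs_pos_lt; lra).
  assert (Cmod d <= e) by (apply Rmult_le_reg_r with (Rabs (t - s)); lra).
  lra.
Qed.

Lemma deriv_zero T f t d : is_time_scale T -> bounded_set T ->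
  inf_ts T <> rho_ts T (sup_ts T) -> kappa_ts T t ->
  (forall s, T s -> f s = RtoC 0) -> is_delta_deriv T f t d -> d = RtoC 0.
Proof.
  intros HT HB Hne Hk Hf Hd.
  pose proof (proj1 (kappa_iff T t HT HB) Hk) as [Ht Htb].
  destruct (sig_cases T t HT) as [Hrd|[[s0 [Hs0 [Hts0 Hno]]]|Htop]].
  - apply (deriv_zero_aux T f t d); auto.
    + apply sig_rd; auto.
    + intros del Hdel. destruct (Hrd del Hdel) as [s [Hs [H1 H2]]]. exists s.
      split; auto. split; [lra|]. rewrite Rabs_minus_sym. apply Rabs_def1; lra.
  - pose proof (d_step T f t d Ht Hd) as S. rewrite (sig_rs T t s0) in S; auto.
    rewrite (Hf s0 Hs0), (Hf t Ht) in S.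
    assert (E : Cmult d (RtoC (s0 - t)) = RtoC 0).
    { replace (Cmult d (RtoC (s0 - t))) with (Cminus (Cplus (RtoC 0) (Cmult d (RtoC (s0 - t)))) (RtoC 0)) by ring.
      rewrite <- S. ring. }
    apply Cmult_eq0 in E as [E|E]; auto.
    apply (f_equal fst) in E. simpl in E. lra.
  - destruct (sup_facts T HT HB) as [HM HMu].
    destruct (rho_facts T HT HB) as [Hb [HbM Hbu]].
    pose proof (Htop _ HM). pose proof (HMu t Ht).
    assert (Heq : rho_ts T (sup_ts T) = sup_ts T) by lra.
    apply (deriv_zero_aux T f t d); auto.
    + apply sig_top; auto.
    + intros del Hdel. destruct (rho_dense T HT HB Hne Heq del Hdel) as [s [Hs [H1 H2]]].
      exists s. split; auto. split; [lra|]. apply Rabs_def1; lra.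
Qed.

Theorem theorem1
  (T : R -> Prop) (q : R -> R) (a : R)
  (a11 a12 a21 a22 b11 b12 b21 b22 : R)
  (S S1 Cs Cs1 : C -> R -> C) :
  is_time_scale T -> bounded_set T ->
  inf_ts T <> rho_ts T (sup_ts T) ->
  kappa_ts T a ->
  continuous_on_ts T q ->
  (forall lam, is_solution T q a lam (S lam) (S1 lam) /\
               S lam a = RtoC 0 /\ S1 lam a = RtoC 1) ->
  (forall lam, is_solution T q a lam (Cs lam) (Cs1 lam) /\
               Cs lam a = RtoC 1 /\ Cs1 lam a = RtoC 0) ->
  forall lam : C,
    let al := inf_ts T in let be := rho_ts T (sup_ts T) in
    let U y y1 := bform a11 a12 a21 a22 al be y y1 in
    let V y y1 := bform b11 b12 b21 b22 al be y y1 in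
    Cminus (Cmult (U (Cs lam) (Cs1 lam)) (V (S lam) (S1 lam)))
           (Cmult (V (Cs lam) (Cs1 lam)) (U (S lam) (S1 lam))) = RtoC 0
    <-> is_eigenvalue T q a a11 a12 a21 a22 b11 b12 b21 b22 lam.
Proof.
  intros HT HB Hne Ha _ HS HC lam. cbv zeta. unfold is_eigenvalue. cbv zeta.
  destruct (HS lam) as [SolS [HSa HS1a]]. destruct (HC lam) as [SolC [HCa HC1a]].
  destruct (inf_facts T HT HB) as [Hm Hmu].
  destruct (rho_facts T HT HB) as [Hb [HbM Hbu]].
  assert (Hkal : kappa_ts T (inf_ts T)) by (apply kappa_iff; auto).
  assert (Hkbe : kappa_ts T (rho_ts T (sup_ts T))) by (apply kappa_iff; auto; split; auto; lra).
  set (al := inf_ts T) in *. set (be := rho_ts T (sup_ts T)) in *.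
  set (UC := bform a11 a12 a21 a22 al be (Cs lam) (Cs1 lam)).
  set (US := bform a11 a12 a21 a22 al be (S lam) (S1 lam)).
  set (VC := bform b11 b12 b21 b22 al be (Cs lam) (Cs1 lam)).
  set (VS := bform b11 b12 b21 b22 al be (S lam) (S1 lam)).
  split.
  - intros Hdet. destruct (pick UC US VC VS Hdet) as [c1 [c2 [Hnz [E1 E2]]]].
    set (y := fun x => Cplus (Cplus (Cmult c1 (Cs lam x)) (Cmult c2 (S lam x))) (Cmult (RtoC 0) (S lam x))).
    set (y1 := fun x => Cplus (Cplus (Cmult c1 (Cs1 lam x)) (Cmult c2 (S1 lam x))) (Cmult (RtoC 0) (S1 lam x))).
    exists y, y1. split; [|split; [|split]].
    + apply sol_lin; auto.
    + rewrite <- E1. unfold y, y1, UC, US, bform. ring.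
    + rewrite <- E2. unfold y, y1, VC, VS, bform. ring.
    + destruct (classic (c1 = RtoC 0)) as [H1|H1].
      * destruct Hnz as [Hn|Hn]; [contradiction|].
        apply NNPP. intro Hall.
        assert (HSz : forall s, T s -> S lam s = RtoC 0).
        { intros s Hs. destruct (classic (y s = RtoC 0)) as [Hy|Hy].
          - unfold y in Hy. rewrite H1 in Hy.
            replace (Cplus (Cplus (Cmult (RtoC 0) (Cs lam s)) (Cmult c2 (S lam s))) (Cmult (RtoC 0) (S lam s)))
              with (Cmult c2 (S lam s)) in Hy by ring.
            apply Cmult_eq0 in Hy as [Hy|Hy]; [contradiction|auto].
          - exfalso. apply Hall. exists s. auto. }
        destruct SolS as [DS _].
        pose proof (deriv_zero T (S lam) a (S1 lam a) HT HB Hne Ha HSz (DS a Ha)) as Hz.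
        rewrite HS1a in Hz. apply C1_neq0; auto.
      * exists a. split; [apply Ha|]. unfold y. rewrite HCa, HSa.
        replace (Cplus (Cplus (Cmult c1 (RtoC 1)) (Cmult c2 (RtoC 0))) (Cmult (RtoC 0) (RtoC 0))) with c1 by ring.
        auto.
  - intros [y [y1 [Hy [HU [HV [t0 [Ht0 Hy0]]]]]]].
    set (c1 := y a). set (c2 := y1 a).
    set (z := fun x => Cplus (Cplus (Cmult (RtoC 1) (y x)) (Cmult (Copp c1) (Cs lam x))) (Cmult (Copp c2) (S lam x))).
    set (z1 := fun x => Cplus (Cplus (Cmult (RtoC 1) (y1 x)) (Cmult (Copp c1) (Cs1 lam x))) (Cmult (Copp c2) (S1 lam x))).
    assert (Solz : is_solution T q a lam z z1) by (apply sol_lin; auto).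
    assert (Hza : z a = RtoC 0) by (unfold z; rewrite HCa, HSa; unfold c1; ring).
    assert (Hz1a : z1 a = RtoC 0) by (unfold z1; rewrite HC1a, HS1a; unfold c2; ring).
    destruct Solz as [Dz [z2 Ez]].
    assert (P : pack T a lam z z1 z2).
    { split; [auto|split; [auto|split; [auto|split; [auto|split; [|auto]]]]].
      intros t Ht. destruct (Ez t Ht) as [D2 E]. split; auto.
      rewrite Hza in E.
      replace (z2 t) with (Copp (Cplus (Copp (z2 t)) (Cmult (RtoC (q t)) (RtoC 0)))) by ring.
      rewrite E. ring. }
    destruct (uniq T a lam z z1 z2 P al Hkal) as [Za Z1a].
    destruct (uniq T a lam z z1 z2 P be Hkbe) as [Zb Z1b].
    pose proof (uniq_T T a lam z z1 z2 P t0 Ht0) as Zt.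
    assert (R0 : forall x, y x = Cplus (z x) (Cplus (Cmult c1 (Cs lam x)) (Cmult c2 (S lam x)))).
    { intros x. unfold z. ring. }
    assert (R1 : forall x, y1 x = Cplus (z1 x) (Cplus (Cmult c1 (Cs1 lam x)) (Cmult c2 (S1 lam x)))).
    { intros x. unfold z1. ring. }
    assert (E1 : Cplus (Cmult c1 UC) (Cmult c2 US) = RtoC 0).
    { rewrite <- HU. unfold UC, US, bform. rewrite (R0 al), (R0 be), (R1 al), (R1 be), Za, Zb, Z1a, Z1b. ring. }
    assert (E2 : Cplus (Cmult c1 VC) (Cmult c2 VS) = RtoC 0).
    { rewrite <- HV. unfold VC, VS, bform. rewrite (R0 al), (R0 be), (R1 al), (R1 be), Za, Zb, Z1a, Z1b. ring. }
    set (det := Cminus (Cmult UC VS) (Cmult VC US)).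
    assert (D1 : Cmult det c1 = RtoC 0).
    { replace (Cmult det c1) with (Cminus (Cmult VS (Cplus (Cmult c1 UC) (Cmult c2 US))) (Cmult US (Cplus (Cmult c1 VC) (Cmult c2 VS)))) by (unfold det; ring).
      rewrite E1, E2. ring. }
    assert (D2 : Cmult det c2 = RtoC 0).
    { replace (Cmult det c2) with (Cminus (Cmult UC (Cplus (Cmult c1 VC) (Cmult c2 VS))) (Cmult VC (Cplus (Cmult c1 UC) (Cmult c2 US)))) by (unfold det; ring).
      rewrite E1, E2. ring. }
    apply Cmult_eq0 in D1 as [D1|D1]; auto.
    apply Cmult_eq0 in D2 as [D2|D2]; auto.
    exfalso. apply Hy0. rewrite (R0 t0), Zt. fold c1 c2 in D1, D2. rewrite D1, D2. ring.
Qed.
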